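(* For every positive integer $n$, $$\sum_{\lambda \in \mathcal{H}_n} t^{\mathrm{rep}(\lambda)} = \sum_{\lambda \in \mathcal{H}_n} t^{\mathrm{even}(\lambda)}$$ as polynomials in $t$.
   Context: A partition is a finite nonempty weakly decreasing sequence $\lambda=(\lambda_1,\ldots,\lambda_k)$ of positive integers; $\ell(\lambda)=k$ is its number of parts. The perimeter of $\lambda$ is $\Gamma(\lambda)=\lambda_1+\ell(\lambda)-1$, and $\mathcal{H}_n$ is the (finite) set of partitions with perimeter $n$. For a partition $\lambda$, $\mathrm{rep}(\lambda)=|\{1\le i\le \ell(\lambda)-1:\lambda_i=\lambda_{i+1}\}|$ and $\mathrm{even}(\lambda)=|\{1\le i\le \ell(\lambda): \lambda_i \text{ is even}\}|$. *)

(* Defs.v *)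
From mathcomp Require Import all_boot all_order all_algebra.
Set Implicit Arguments. Unset Strict Implicit. Unset Printing Implicit Defensive.
Import GRing.Theory.

Definition is_partition (l : seq nat) : bool :=
  [&& l != [::], all (fun x => 0 < x) l & sorted geq l].

Definition perimeter (l : seq nat) : nat := head 0 l + size l - 1.

Definition rep (l : seq nat) : nat :=
  count (fun i => nth 0 l i == nth 0 l i.+1) (iota 0 (size l).-1).

Definition even_parts (l : seq nat) : nat := count (fun x => ~~ odd x) l.

Fixpoint seqs_upto (n k : nat) : seq (seq nat) :=
  match k with
  | 0 => [:: [::]]
  | k'.+1 => [seq x :: s | x <- iota 1 n, s <- seqs_upto n k']
  end.

(* Every partition of perimeter n has length <= n and parts <= n, so
   H_n is the duplicate-free list of those candidates that are partitions
   of perimeter n. *)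
Definition H (n : nat) : seq (seq nat) :=
  [seq l <- flatten [seq seqs_upto n k | k <- iota 0 n.+1]
     | is_partition l && (perimeter l == n)].

(* Main.v *)
Require Import Defs.
From mathcomp Require Import all_boot all_order all_algebra zify.

Lemma rep_cons2 x y s : rep [:: x, y & s] = (x == y) + rep (y :: s).
Proof.
rewrite /rep /= -[1%N]/(1 + 0)%N iotaDl count_map /=.
by congr (_ + _).
Qed.

Lemma rep_rcons x s z : rep (rcons (x :: s) z) = rep (x :: s) + (last x s == z).
Proof.
elim: s x => [|y s IH] x /=.
  by rewrite rep_cons2 /rep /= addn0.
rewrite rep_cons2; have := IH y; rewrite /= => ->.
by rewrite rep_cons2 addnA.
Qed.

Lemma rep_mapS s : rep (map succn s) = rep s.
Proof.
elim: s => [|x [|y s] IH] //=.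
by rewrite !rep_cons2 eqSS -IH.
Qed.

Lemma path_last_le x s : path geq x s -> all (fun y => last x s <= y) (x :: s).
Proof.
elim: s x => [|y s IH] x /=; first by rewrite leqnn.
move=> /andP[yx /IH] /= /andP[ly ->]; rewrite ly andbT.
by rewrite andbT (leq_trans ly yx).
Qed.

Lemma pred_test a b : b <= a -> b.-1 <= a.-1.
Proof. lia. Qed.

Fixpoint P n : seq (seq nat) :=
  match n with
  | 0 => [::]
  | m.+1 => match m with
            | 0 => [:: [:: 1]]
            | _.+1 => [seq rcons l 1 | l <- P m] ++ [seq map succn l | l <- P m]
            end
  end.

Lemma PS m : P m.+2 = [seq rcons l 1 | l <- P m.+1] ++ [seq map succn l | l <- P m.+1].
Proof. by []. Qed.
Arguments P : simpl never.

Lemma ispart_cons x s : is_partition (x :: s) = [&& 0 < x, all (fun y => 0 < y) s & path geq x s].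
Proof. by rewrite /is_partition /= andbA. Qed.

Lemma perim_cons x s : perimeter (x :: s) = x + size s.
Proof. by rewrite /perimeter /=; lia. Qed.

Lemma P_mem n (l : seq nat) : (l \in P n.+1) = is_partition l && (perimeter l == n.+1).
Proof.
elim: n l => [|n IH] l.
  rewrite /= inE; apply/idP/idP; first by move/eqP->.
  case: l => [|x s] //; rewrite ispart_cons perim_cons.
  move=> /andP[/and3P[x0 _ _] /eqP e].
  have [-> ] : x = 1 /\ size s = 0 by lia.
  by case: s e.
rewrite PS mem_cat; apply/orP/idP.
  case=> [/mapP[m Hm ->] | /mapP[m Hm ->]]; rewrite IH in Hm;
  (case: m Hm => [|x s] //; rewrite ispart_cons perim_cons => /andP[/and3P[x0 sp ps] /eqP e]).
    rewrite /= ispart_cons perim_cons size_rcons all_rcons sp rcons_path ps x0 /=.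
    have : last x s \in x :: s by apply: mem_last.
    rewrite inE => /orP[/eqP -> | ]; first by rewrite x0; apply/eqP; lia.
    move=> /(allP sp) -> /=; apply/eqP; lia.
  rewrite /= ispart_cons perim_cons size_map all_map path_map.
  apply/andP; split; last by apply/eqP; lia.
  apply/and3P; split => //; by apply/allP.
case: l => [|x s] //; rewrite ispart_cons perim_cons => /andP[/and3P[x0 sp ps] /eqP e].
have lpos : 0 < last x s.
  have : last x s \in x :: s by apply: mem_last.
  by rewrite inE => /orP[/eqP -> | /(allP sp)].
case: (boolP (last x s == 1)) => L.
  left.
  move: sp ps e L lpos; case/lastP: s => [|s' y] /=.
    by move=> _ _ e /eqP x1 _; lia.
  rewrite last_rcons all_rcons size_rcons rcons_path => /andP[_ sp] /andP[ps _] e /eqP y1 _.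
  subst y; apply/mapP; exists (x :: s') => //.
  by rewrite IH ispart_cons perim_cons x0 sp ps /=; apply/eqP; lia.
right.
have H2 : all (fun y => 2 <= y) (x :: s).
  have := @path_last_le x s ps; apply: sub_all => y /= ly; move: L lpos ly; lia.
move: H2 => /= /andP[x2 H2].
apply/mapP; exists (map predn (x :: s)).
  rewrite IH /= ispart_cons perim_cons size_map all_map path_map.
  apply/andP; split; last by apply/eqP; lia.
  apply/and3P; split; first by lia.
    by apply: sub_all H2 => y /=; lia.
  by apply: sub_path ps => a b /=; lia.
rewrite -map_comp map_id_in //= => y; rewrite inE => /orP[/eqP -> /= | ys]; first by lia.
by move: (allP H2 y ys) => /=; lia.
Qed.

Lemma last_pos x s : is_partition (x :: s) -> 0 < last x s.
Proof.
rewrite ispart_cons => /and3P[x0 sp _].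
have : last x s \in x :: s by apply: mem_last.
by rewrite inE => /orP[/eqP -> | /(allP sp)].
Qed.

Lemma P_uniq n : uniq (P n).
Proof.
case: n => // n; elim: n => // n IH.
rewrite PS cat_uniq (map_inj_uniq (@rcons_injl _ 1)) IH (map_inj_uniq (inj_map succn_inj)) IH /= andbT.
apply/hasPn => l /mapP[m Hm ->]; apply/negP => /mapP[m' _ E].
rewrite P_mem in Hm; case: m Hm E => [|x s] // /andP[/last_pos lp _] E.
have := congr1 (last 0) E; rewrite last_rcons /= last_map => /eqP; rewrite eqSS.
by move: lp; case: (last x s).
Qed.

Lemma seqs_mem n k (l : seq nat) :
  (l \in seqs_upto n k) = (size l == k) && all (fun x => 0 < x <= n) l.
Proof.
elim: k l => [|k IH] l.
  by rewrite /= inE; case: l.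
apply/allpairsP/idP => [[[x s] /= [xi si ->]] | ].
  rewrite /= IH in si; rewrite mem_iota in xi.
  move: si => /andP[/eqP sk sa]; rewrite /= sk eqxx sa andbT /=.
  by move: xi; rewrite add1n ltnS.
case: l => [|x s] //= /andP[sk /andP[xb sb]]; exists (x, s); split => //=.
  by rewrite mem_iota add1n ltnS.
by rewrite IH -eqSS sk sb.
Qed.

Lemma seqs_uniq n k : uniq (seqs_upto n k).
Proof.
elim: k => //= k IH; apply: allpairs_uniq => //; first exact: iota_uniq.
by move=> [a b] [c d] _ _ /= [-> ->].
Qed.

Lemma H_mem n (l : seq nat) : (l \in H n) = is_partition l && (perimeter l == n).
Proof.
rewrite mem_filter; apply/andb_idr => /andP[pl /eqP pe].
apply/flatten_mapP; exists (size l).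
  rewrite mem_iota; case: l pl pe => [|x s] //; rewrite ispart_cons perim_cons => /and3P[x0 _ _].
  by move=> <- /=; lia.
rewrite seqs_mem eqxx /=; case: l pl pe => [|x s] //; rewrite ispart_cons perim_cons => /and3P[x0 sp ps] e /=.
have ax : all (geq x) s by apply: order_path_min ps => b a c h1 h2; exact: leq_trans h2 h1.
rewrite x0 /=; apply/andP; split; first by lia.
apply/allP => y ys; move: (allP sp y ys) (allP ax y ys) => /=; lia.
Qed.

Lemma flat_uniq n r : uniq r -> uniq (flatten (map (seqs_upto n) r)).
Proof.
elim: r => //= k r IH /andP[kr ur].
rewrite cat_uniq seqs_uniq IH // andbT /=.
apply/hasPn => l /flatten_mapP[j jr lj]; rewrite seqs_mem in lj *.
rewrite seqs_mem; apply/negP => /andP[/eqP sk _]; move: lj => /andP[/eqP sj _].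
by move: kr; rewrite -sk sj jr.
Qed.

Lemma H_perm n : perm_eq (H n) (P n).
Proof.
apply: uniq_perm; first by apply/filter_uniq/flat_uniq/iota_uniq.
  exact: P_uniq.
move=> l; rewrite H_mem; case: n => [|n]; last by rewrite P_mem.
rewrite /= in_nil; case: l => [|x s] //; rewrite ispart_cons perim_cons.
by apply/negP => /andP[/and3P[x0 _ _] /eqP]; lia.
Qed.

Import GRing.Theory.
Local Open Scope ring_scope.

Definition X := ('X : {poly int}).
Definition Aa n := \sum_(l <- P n | last 0%N l == 1%N) X ^+ rep l.
Definition Bb n := \sum_(l <- P n | last 0%N l != 1%N) X ^+ rep l.
Definition Pp n := \sum_(l <- P n) X ^+ even_parts l.
Definition Qq n := \sum_(l <- P n) X ^+ count odd l.

Lemma P_cons n l : l \in P n -> exists x s, l = x :: s /\ is_partition (x :: s).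
Proof.
case: n => [|n]; first by rewrite in_nil.
rewrite P_mem; case: l => [|x s] // /andP[pl _]; by exists x, s.
Qed.

Lemma AB_split n : \sum_(l <- P n) X ^+ rep l = Aa n + Bb n.
Proof. by rewrite (bigID (fun l => last 0%N l == 1%N)). Qed.

Lemma mapS_last n j : j \in P n -> (last 0%N (map succn j) == 1%N) = false.
Proof.
move=> /P_cons [x [s [-> /last_pos lp]]] /=; rewrite last_map eqSS.
by move: lp; case: (last x s).
Qed.

Lemma S0 m : \sum_(j <- P m.+1 | last 0%N (map succn j) == 1%N) X ^+ rep (map succn j) = 0.
Proof.
rewrite big_seq_cond big_pred0 // => j; case jP: (j \in P m.+1) => //=.
exact: (@mapS_last _ _ jP).
Qed.

Lemma A_rec m : Aa m.+2 = X * Aa m.+1 + Bb m.+1.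
Proof.
rewrite {1}/Aa PS big_cat !big_map S0 /= addr0.
rewrite (eq_bigl (fun _ => true)); last by move=> j; rewrite last_rcons.
rewrite (bigID (fun j => last 0%N j == 1%N)) /= big_distrr /Aa /Bb.
congr (_ + _); rewrite [LHS]big_seq_cond [RHS]big_seq_cond; apply: eq_bigr => j /andP[jP c];
  have [x [s [E _]]] := @P_cons _ _ jP; subst j; rewrite rep_rcons /= in c *.
  by rewrite c addn1 exprS.
by rewrite (negbTE c) addn0.
Qed.

Lemma B_rec m : Bb m.+2 = Aa m.+1 + Bb m.+1.
Proof.
rewrite {1}/Bb PS big_cat !big_map /=.
rewrite big_pred0 ?add0r; last by move=> j; rewrite last_rcons.
rewrite -AB_split big_seq_cond [RHS]big_seq_cond.
apply: eq_big => j; last by move=> _; rewrite rep_mapS.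
case jP: (j \in P m.+1) => //=.
by rewrite (@mapS_last _ _ jP).
Qed.

Lemma even_mapS (j : seq nat) : even_parts (map succn j) = count odd j.
Proof. by rewrite /even_parts; elim: j => //= y j ->; rewrite negbK. Qed.

Lemma odd_mapS (j : seq nat) : count odd (map succn j) = even_parts j.
Proof. by rewrite /even_parts; elim: j => //= y j ->. Qed.

Lemma Pp_rec m : Pp m.+2 = Pp m.+1 + Qq m.+1.
Proof.
rewrite {1}/Pp PS big_cat !big_map /=; congr (_ + _); apply: eq_bigr => j _.
  by rewrite /even_parts -cats1 count_cat /= !addn0.
by rewrite even_mapS.
Qed.

Lemma Qq_rec m : Qq m.+2 = X * Qq m.+1 + Pp m.+1.
Proof.
rewrite {1}/Qq PS big_cat !big_map /= big_distrr; congr (_ + _); apply: eq_bigr => j _.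
  by rewrite -cats1 count_cat /= addn0 addn1 exprS.
by rewrite odd_mapS.
Qed.

Lemma AB_PQ m : Aa m.+2 = Qq m.+1 /\ Bb m.+2 = Pp m.+1.
Proof.
elim: m => [|m [IH1 IH2]].
  rewrite A_rec B_rec /Aa /Bb /Pp /Qq /= !big_cons !big_nil /=.
  by rewrite /rep /= /even_parts /= !expr0 !expr1 !addr0 mulr1.
rewrite (A_rec m.+1) (B_rec m.+1) IH1 IH2 (Pp_rec m) (Qq_rec m).
by split; [|rewrite addrC].
Qed.

Lemma main n : Aa n.+1 + Bb n.+1 = Pp n.+1.
Proof.
case: n => [|m].
  by rewrite /Aa /Bb /Pp /= !big_cons !big_nil /= /rep /even_parts /= addr0.
have [E1 E2] := AB_PQ m; rewrite E1 E2 Pp_rec addrC.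
done.
Qed.

Theorem theorem1p3 (n : nat) : (0 < n)%N ->
  \sum_(l <- H n) ('X : {poly int}) ^+ rep l =
  \sum_(l <- H n) ('X : {poly int}) ^+ even_parts l.
Proof.
case: n => // n _.
rewrite !(perm_big _ (H_perm n.+1)).
by rewrite -[RHS]/(Pp n.+1) -main -AB_split.
Qed.
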